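(* Consider the cone percolation process on $\mathbb{T}_d^+$ ($d\ge 2$) with radius of influence distributed as $R$, where $p_0=\mathbb{P}(R=0)\in(0,1)$. (I) If $\mathbb{E}(d^R) > 1 + p_0$ (including the case $\mathbb{E}(d^R)=\infty$), then $\mathbb{P}_+[V] > 0$. (II) If $\mathbb{E}(d^R) \le 2 - \frac{1}{d}$, then $\mathbb{P}_+[V] = 0$.
   Context: Let $d\ge 2$ and let $\mathbb{T}_d$ be the infinite tree in which every vertex has exactly $d+1$ neighbours. Fix a vertex $\mathcal{O}$ (the origin); $d(u,v)$ denotes graph distance. Write $u\le v$ if $u$ lies on the path from $\mathcal{O}$ to $v$ (so $\mathcal{O}\le v$ for all $v$). Fix a neighbour $w$ of $\mathcal{O}$ and let $\mathbb{T}_d^+$ be the subtree obtained by deleting all vertices $x$ with $w\le x$; in $\mathbb{T}_d^+$ every vertex $u$ has exactly $d$ neighbours $x$ with $u\le x$ (its children). Let $R$ be a random variable with values in $\{0,1,2,\dots\}$, $p_k=\mathbb{P}(R=k)$, and assume $p_0\in(0,1)$. Cone percolation on $G\in\{\mathbb{T}_d,\mathbb{T}_d^+\}$: to each vertex $u$ of $G$ attach an independent copy $R_u$ of $R$; let $B_u=\{v\in G: u\le v,\ d(u,v)\le R_u\}$; set $I_0=\{\mathcal{O}\}$, $I_{n+1}=\bigcup_{u\in I_n}B_u$ for $n\ge0$, $I=\bigcup_{n\ge0}I_n$, and let $V$ be the event $\{|I|=\infty\}$ (survival). $\mathbb{P}_+$ and $\mathbb{P}$ denote the probability measures of the process on $\mathbb{T}_d^+$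 and on $\mathbb{T}_d$ respectively. *)

(* Defs.v *)
From Stdlib Require Import Reals List Arith Lia ClassicalEpsilon.
Import ListNotations.
Open Scope R_scope.

(* Vertices of T_d^+ : words over {0,...,d-1}; the word records the path of
   child indices from the origin O (= the empty word).  In T_d^+ every vertex
   (including O, whose neighbour w was deleted) has exactly d children, so
   T_d^+ is the rooted d-ary tree.  u <= v  iff  u is a prefix of v, and
   d(u,v) = length v - length u for such u, v. *)
Definition word := list nat.

Fixpoint words (d k : nat) : list word :=
  match k with
  | O => [ [] ]
  | S k' => flat_map (fun w => map (fun i => w ++ [i]) (seq 0 d)) (words d k')
  end.

Definition verts_below (d n : nat) : list word := flat_map (words d) (seq 0 n).

(* Given radii c : word -> nat, the set I of vertices eventually influenced:
   O is in I; if u is in I then every v with u <= v and d(u,v) <= c u is in I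
   (that is, B_u is contained in I). *)
Inductive active (d : nat) (c : word -> nat) : word -> Prop :=
| act_root : active d c []
| act_step : forall u s, active d c u -> Forall (fun i => (i < d)%nat) s ->
    (length s <= c u)%nat -> active d c (u ++ s).

Fixpoint psum (f : nat -> R) (n : nat) : R :=
  match n with O => 0 | S m => psum f m + f m end.

(* law of min(R, n) *)
Definition qtrunc (p : nat -> R) (n r : nat) : R :=
  if (r <? n)%nat then p r else 1 - psum p n.

Definition upd (c : word -> nat) (v : word) (r : nat) : word -> nat :=
  fun w => if list_eq_dec Nat.eq_dec w v then r else c w.

(* expectation of F over independent radii min(R_v, n), v in vs *)
Fixpoint csum (p : nat -> R) (n : nat) (vs : list word) (c : word -> nat)
  (F : (word -> nat) -> R) : R :=
  match vs with
  | [] => F c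
  | v :: vs' => psum (fun r => qtrunc p n r * csum p n vs' (upd c v r) F) (S n)
  end.

Definition ind (P : Prop) : R :=
  if excluded_middle_informative P then 1 else 0.

(* P_+[ I contains a vertex at depth n ].  This event depends only on the
   radii of the vertices of depth < n, truncated at n, so its probability is
   the finite sum below. *)
Definition reach_prob (d : nat) (p : nat -> R) (n : nat) : R :=
  csum p n (verts_below d n) (fun _ => 0%nat)
    (fun c => ind (exists v, In v (words d n) /\ active d c v)).

(* {|I| = oo} is the decreasing intersection of the events above, so
   P_+[V] = lim_n reach_prob d p n. *)
Definition survives_pos (d : nat) (p : nat -> R) : Prop :=
  exists eps, eps > 0 /\ forall n, reach_prob d p n >= eps.

Definition dies_as (d : nat) (p : nat -> R) : Prop :=
  Un_cv (reach_prob d p) 0.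

Definition dR_term (d : nat) (p : nat -> R) (k : nat) : R := p k * INR d ^ k.

(* Main.v *)
From Stdlib Require Import Reals List Arith Lia Lra Permutation FunctionalExtensionality ClassicalEpsilon.
Require Import Defs.
Import ListNotations.
Open Scope R_scope.

Lemma psum_ext f g n : (forall r, (r < n)%nat -> f r = g r) -> psum f n = psum g n.
Proof. induction n; simpl; intros H; auto. rewrite IHn by (intros; apply H; lia). rewrite H by lia. auto. Qed.

Lemma psum_plus f g n : psum (fun r => f r + g r) n = psum f n + psum g n.
Proof. induction n; simpl; [lra|]. rewrite IHn; lra. Qed.

Lemma psum_scal a f n : a * psum f n = psum (fun r => a * f r) n.
Proof. induction n; simpl; [lra|]. rewrite <- IHn; lra. Qed.

Lemma psum_zero n : psum (fun _ => 0) n = 0.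
Proof. induction n; simpl; [lra|]. rewrite IHn; lra. Qed.

Lemma psum_exch f n m :
  psum (fun r => psum (fun s => f r s) m) n = psum (fun s => psum (fun r => f r s) n) m.
Proof.
  induction n; simpl.
  - rewrite psum_zero; auto.
  - rewrite IHn. rewrite <- psum_plus. auto.
Qed.

Lemma q_mass p T : psum (qtrunc p T) (S T) = 1.
Proof.
  simpl. rewrite (psum_ext _ p). unfold qtrunc. rewrite Nat.ltb_irrefl. lra.
  intros r Hr. unfold qtrunc. apply Nat.ltb_lt in Hr. rewrite Hr. auto.
Qed.

Arguments psum : simpl never.

Lemma upd_comm (c : word -> nat) v w r s : v <> w -> upd (upd c v r) w s = upd (upd c w s) v r.
Proof.
  intros H. apply functional_extensionality. intro x. unfold upd.
  destruct (list_eq_dec Nat.eq_dec x w); destruct (list_eq_dec Nat.eq_dec x v); subst; auto.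
  congruence.
Qed.

Lemma upd_same (c : word -> nat) v r s : upd (upd c v r) v s = upd c v s.
Proof.
  apply functional_extensionality. intro x. unfold upd.
  destruct (list_eq_dec Nat.eq_dec x v); auto.
Qed.

Lemma upd_other (c : word -> nat) v r x : x <> v -> upd c v r x = c x.
Proof. intros. unfold upd. destruct (list_eq_dec Nat.eq_dec x v); congruence. Qed.

Lemma upd_eq (c : word -> nat) v r : upd c v r v = r.
Proof. unfold upd. destruct (list_eq_dec Nat.eq_dec v v); congruence. Qed.

Definition insens (F : (word -> nat) -> R) (v : word) := forall c r, F (upd c v r) = F c.

Lemma csum_app p T l1 l2 c F :
  csum p T (l1 ++ l2) c F = csum p T l1 c (fun c1 => csum p T l2 c1 F).
Proof.
  revert c; induction l1; intros c; simpl; auto.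
  apply psum_ext; intros. rewrite IHl1. auto.
Qed.

Lemma csum_ext p T l c F G : (forall c, F c = G c) -> csum p T l c F = csum p T l c G.
Proof. intros H. assert (F = G) by (apply functional_extensionality; auto). subst; auto. Qed.

Lemma csum_ext_at p T l v0 F G : ~ In v0 l -> forall c,
  (forall c', c' v0 = c v0 -> F c' = G c') -> csum p T l c F = csum p T l c G.
Proof.
  induction l; intros Hn c H; simpl; auto.
  apply psum_ext; intros. f_equal. apply IHl.
  - intro; apply Hn; right; auto.
  - intros c' Hc. apply H. rewrite Hc. apply upd_other. intro; subst; apply Hn; left; auto.
Qed.

Lemma csum_linear p T l c a b F G :
  csum p T l c (fun c1 => a * F c1 + b * G c1) = a * csum p T l c F + b * csum p T l c G.
Proof.
  revert c; induction l; intros c; simpl; auto.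
  rewrite !psum_scal, <- psum_plus. apply psum_ext; intros. rewrite IHl. ring.
Qed.

Lemma csum_const p T l c K : csum p T l c (fun _ => K) = K.
Proof.
  revert c; induction l; intros c; simpl; auto.
  rewrite (psum_ext _ (fun r => K * qtrunc p T r)).
  rewrite <- psum_scal, q_mass. ring. intros. rewrite IHl. ring.
Qed.

Lemma csum_mul_insens p T l G : (forall v, In v l -> insens G v) ->
  forall c X, csum p T l c (fun c1 => X c1 * G c1) = csum p T l c X * G c.
Proof.
  induction l; intros HG c X; simpl; auto.
  rewrite Rmult_comm, psum_scal. apply psum_ext; intros.
  rewrite IHl. rewrite HG by (left; auto). ring. intros; apply HG; right; auto.
Qed.

Lemma csum_insens p T l F v : insens F v -> ~ In v l -> insens (fun c => csum p T l c F) v.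
Proof.
  intros HF Hn c r. revert c. induction l; intros c; simpl; auto.
  apply psum_ext; intros. f_equal. rewrite upd_comm. apply IHl.
  intro; apply Hn; right; auto. intro; subst; apply Hn; left; auto.
Qed.

Lemma csum_swap p T x y l c F : csum p T (x :: y :: l) c F = csum p T (y :: x :: l) c F.
Proof.
  destruct (list_eq_dec Nat.eq_dec x y). subst; auto.
  simpl.
  rewrite (psum_ext (fun r => qtrunc p T r * psum _ _) (fun r => psum (fun s => qtrunc p T r * (qtrunc p T s * csum p T l (upd (upd c x r) y s) F)) (S T))).
  rewrite psum_exch. apply psum_ext; intros. rewrite psum_scal. apply psum_ext; intros.
  rewrite upd_comm by auto. ring.
  intros. apply psum_scal.
Qed.

Lemma csum_perm p T l l' : Permutation l l' -> forall c F, csum p T l c F = csum p T l' c F.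
Proof.
  induction 1; intros c F; auto.
  - simpl. apply psum_ext; intros. rewrite IHPermutation; auto.
  - apply csum_swap.
  - rewrite IHPermutation1. auto.
Qed.

Definition shift (c : word -> nat) (i : nat) : word -> nat := fun w => c (i :: w).

Lemma shift_upd c i v r : shift (upd c (i :: v) r) i = upd (shift c i) v r.
Proof.
  apply functional_extensionality; intro w. unfold shift, upd.
  destruct (list_eq_dec Nat.eq_dec (i :: w) (i :: v)); destruct (list_eq_dec Nat.eq_dec w v); subst; auto; congruence.
Qed.

Lemma csum_relabel p T i L c G :
  csum p T (map (cons i) L) c (fun c1 => G (shift c1 i)) = csum p T L (shift c i) G.
Proof.
  revert c; induction L; intros c; simpl; auto.
  apply psum_ext; intros. rewrite IHL, shift_upd. auto.
Qed.

Lemma In_words d k v : In v (words d k) <-> length v = k /\ Forall (fun i => (i < d)%nat) v.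
Proof.
  revert v; induction k; intros v; simpl.
  - split. intros [H|[]]; subst; simpl; auto.
    intros [H _]. destruct v; simpl in *; auto; lia.
  - rewrite in_flat_map. split.
    + intros [w [Hw Hv]]. apply in_map_iff in Hv. destruct Hv as [i [<- Hi]].
      apply IHk in Hw. destruct Hw as [Hl Hf]. apply in_seq in Hi.
      rewrite length_app; simpl. split. lia. apply Forall_app; split; auto. repeat constructor; lia.
    + intros [Hl Hf]. destruct (exists_last (l:=v)) as [w [i ->]].
      destruct v; simpl in Hl; [lia|discriminate].
      apply Forall_app in Hf. destruct Hf as [Hf1 Hf2]. inversion Hf2; subst.
      rewrite length_app in Hl; simpl in Hl.
      exists w; split. apply IHk; split; auto; lia.
      apply in_map_iff. exists i; split; auto. apply in_seq; lia.
Qed.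

Lemma NoDup_flat_map {A B} (f : A -> list B) l : NoDup l -> (forall x, In x l -> NoDup (f x)) ->
  (forall x y z, In x l -> In y l -> x <> y -> In z (f x) -> ~ In z (f y)) -> NoDup (flat_map f l).
Proof.
  induction l; intros Hl Hf Hd; simpl. constructor.
  inversion Hl; subst. apply NoDup_app.
  - apply Hf; left; auto.
  - apply IHl; auto. intros; apply Hf; right; auto. intros x y z Hx Hy; apply Hd; right; auto.
  - intros z Hz Hz'. apply in_flat_map in Hz'. destruct Hz' as [y [Hy Hzy]].
    apply (Hd a y z); auto. left; auto. right; auto. intro; subst; auto.
Qed.

Lemma NoDup_words d k : NoDup (words d k).
Proof.
  induction k; simpl. constructor. simpl; auto. constructor.
  apply NoDup_flat_map; auto.
  - intros x _. apply FinFun.Injective_map_NoDup. intros a b H. apply app_inj_tail in H. tauto.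
    apply seq_NoDup.
  - intros x y z _ _ Hxy Hz Hz'. apply in_map_iff in Hz, Hz'.
    destruct Hz as [i [<- _]]. destruct Hz' as [i' [H _]]. apply app_inj_tail in H. destruct H; auto.
Qed.

Lemma In_verts d n v : In v (verts_below d n) <-> (length v < n)%nat /\ Forall (fun i => (i < d)%nat) v.
Proof.
  unfold verts_below. rewrite in_flat_map. split.
  - intros [k [Hk Hv]]. apply in_seq in Hk. apply In_words in Hv. destruct Hv; split; auto; lia.
  - intros [H1 H2]. exists (length v). split. apply in_seq; lia. apply In_words; auto.
Qed.

Lemma NoDup_verts_gen d a n : NoDup (flat_map (words d) (seq a n)).
Proof.
  apply NoDup_flat_map. apply seq_NoDup. intros; apply NoDup_words.
  intros x y z _ _ Hxy Hz Hz'. apply In_words in Hz, Hz'. destruct Hz, Hz'. congruence.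
Qed.

Definition rest' d m := flat_map (fun i => map (cons i) (verts_below d m)) (seq 0 d).

Lemma rest_perm d m : Permutation (flat_map (words d) (seq 1 m)) (rest' d m).
Proof.
  apply NoDup_Permutation. apply NoDup_verts_gen.
  - unfold rest'. apply NoDup_flat_map. apply seq_NoDup.
    intros. apply FinFun.Injective_map_NoDup. intros a b Hab; inversion Hab; auto. apply NoDup_verts_gen.
    intros x y z _ _ Hxy Hz Hz'. apply in_map_iff in Hz, Hz'.
    destruct Hz as [w [<- _]]. destruct Hz' as [w' [Hq _]]. inversion Hq; congruence.
  - intros v. unfold rest'. rewrite in_flat_map, in_flat_map. split.
    + intros [k [Hk Hv]]. apply in_seq in Hk. apply In_words in Hv. destruct Hv as [Hl Hf].
      destruct v as [|i w]. simpl in Hl; lia. inversion Hf; subst.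
      exists i. split. apply in_seq; lia. apply in_map_iff. exists w; split; auto.
      apply In_verts. simpl in Hk; split; auto; lia.
    + intros [i [Hi Hv]]. apply in_seq in Hi. apply in_map_iff in Hv. destruct Hv as [w [<- Hw]].
      apply In_verts in Hw. destruct Hw. exists (length (i :: w)). split. apply in_seq; simpl; lia.
      apply In_words. split; auto. constructor; auto; lia.
Qed.

Lemma active_root0 d c v : c [] = 0%nat -> active d c v -> v = [].
Proof.
  intros H0 H. induction H; auto. subst. rewrite H0 in H2. destruct s; simpl in *; auto. lia.
Qed.

Definition cs (c : word -> nat) i j := upd (shift c i) [] (Nat.max (c [i]) j).

Lemma sub_fwd d c j : c [] = S j -> forall v, active d c v -> forall i w, v = i :: w -> active d (cs c i j) w.
Proof.
  intros Hc v H. induction H; intros i w Hv. discriminate.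
  destruct u as [|i' u'].
  - simpl in Hv. subst s. rewrite Hc in H1. simpl in H1. inversion H0; subst.
    apply (act_step d (cs c i j) [] w). constructor. auto.
    unfold cs. rewrite upd_eq. lia.
  - simpl in Hv. injection Hv as Hi' Hw'. subst i w. specialize (IHactive i' u' eq_refl).
    apply act_step; auto. unfold cs. destruct u' as [|a u''].
    rewrite upd_eq. lia. rewrite upd_other by discriminate. unfold shift. auto.
Qed.

Lemma sub_bwd d c j i : c [] = S j -> (i < d)%nat -> forall w, active d (cs c i j) w -> active d c (i :: w).
Proof.
  intros Hc Hi w H. induction H.
  - apply (act_step d c [] [i]). constructor. repeat constructor; auto. rewrite Hc; simpl; lia.
  - destruct u as [|a u'].
    + unfold cs in H1. rewrite upd_eq in H1. simpl.
      destruct (Nat.le_ge_cases (c [i]) j).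
      * rewrite Nat.max_r in H1 by auto. apply (act_step d c [] (i :: s)). constructor.
        constructor; auto. rewrite Hc. simpl; lia.
      * rewrite Nat.max_l in H1 by auto. apply (act_step d c [i] s); auto.
    + unfold cs in H1. rewrite upd_other in H1 by discriminate. unfold shift in H1.
      change (i :: (a :: u') ++ s) with ((i :: a :: u') ++ s). apply act_step; auto.
Qed.

Lemma event_split d c j m : c [] = S j ->
  ((exists v, In v (words d (S m)) /\ active d c v) <->
   (exists i, In i (seq 0 d) /\ exists w, In w (words d m) /\ active d (cs c i j) w)).
Proof.
  intros Hc. split.
  - intros [v [Hv Ha]]. apply In_words in Hv. destruct Hv as [Hl Hf].
    destruct v as [|i w]. simpl in Hl; lia. inversion Hf; subst.
    exists i. split. apply in_seq; lia. exists w. split. apply In_words; simpl in Hl; split; auto.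
    eapply (sub_fwd d c j Hc); eauto.
  - intros [i [Hi [w [Hw Ha]]]]. apply in_seq in Hi. exists (i :: w). split.
    apply In_words in Hw. apply In_words. destruct Hw; split; simpl; auto. constructor; auto; lia.
    apply (sub_bwd d c j i Hc); auto; lia.
Qed.

Definition prodl (f : nat -> R) (l : list nat) := fold_right (fun i acc => f i * acc) 1 l.

Lemma ind_iff (P Q : Prop) : (P <-> Q) -> ind P = ind Q.
Proof.
  intros H. unfold ind. destruct (excluded_middle_informative P), (excluded_middle_informative Q); tauto.
Qed.

Lemma ind_exists_list (E : nat -> Prop) l :
  ind (exists i, In i l /\ E i) = 1 - prodl (fun i => 1 - ind (E i)) l.
Proof.
  induction l; simpl.
  - unfold ind. destruct (excluded_middle_informative _) as [[i [[] _]]|]; lra.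
  - destruct (excluded_middle_informative (E a)) as [Ha|Ha].
    + unfold ind at 1. destruct (excluded_middle_informative _) as [_|Hn].
      unfold ind. destruct (excluded_middle_informative (E a)); [|tauto]. ring.
      exfalso; apply Hn; exists a; auto.
    + rewrite (ind_iff _ (exists i, In i l /\ E i)).
      rewrite IHl. unfold ind at 2. destruct (excluded_middle_informative (E a)); [tauto|]. ring.
      split. intros [i [[->|Hi] He]]; [tauto|eauto]. intros [i [Hi He]]; eauto.
Qed.

Lemma prodl_const x l : prodl (fun _ => x) l = x ^ length l.
Proof. induction l; simpl; auto. rewrite IHl; auto. Qed.

Lemma prodl_insens (l : list nat) (K : nat -> (word -> nat) -> R) v :
  (forall i, In i l -> insens (K i) v) -> insens (fun c => prodl (fun i => K i c) l) v.
Proof.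
  intros H c r. induction l; simpl; auto. rewrite H by (left; auto). rewrite IHl; auto.
  intros; apply H; right; auto.
Qed.

Lemma csum_prod p T L l (H : nat -> (word -> nat) -> R) :
  NoDup l -> (forall i v, In i l -> (forall w, v <> i :: w) -> insens (H i) v) ->
  forall c, csum p T (flat_map (fun i => map (cons i) L) l) c (fun c1 => prodl (fun i => H i c1) l)
   = prodl (fun i => csum p T (map (cons i) L) c (H i)) l.
Proof.
  induction l as [|a l IH]; intros Hl HH c; simpl. reflexivity.
  inversion Hl; subst.
  rewrite csum_app.
  assert (IH' : forall c1, csum p T (flat_map (fun i => map (cons i) L) l) c1
            (fun c2 => H a c2 * prodl (fun i => H i c2) l) =
            prodl (fun i => csum p T (map (cons i) L) c1 (H i)) l * H a c1).
  { intros c1. rewrite (csum_ext _ _ _ _ _ (fun c2 => prodl (fun i => H i c2) l * H a c2)) by (intros; ring).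
    rewrite csum_mul_insens. rewrite IH; auto. intros; apply HH; auto; right; auto.
    intros v Hv. apply in_flat_map in Hv. destruct Hv as [i [Hi Hv]]. apply in_map_iff in Hv.
    destruct Hv as [w [<- _]]. apply HH. left; auto. intros w' Hw'. inversion Hw'; subst; auto. }
  rewrite (csum_ext _ _ _ _ _ _ IH').
  rewrite (Rmult_comm (csum _ _ _ _ _)).
  rewrite (csum_ext _ _ _ _ _ (fun c1 => H a c1 * prodl (fun i => csum p T (map (cons i) L) c1 (H i)) l)) by (intros; ring).
  rewrite csum_mul_insens. ring.
  intros v Hv. apply in_map_iff in Hv. destruct Hv as [w [<- _]].
  apply prodl_insens. intros i Hi. apply csum_insens.
  apply HH. right; auto. intros w' Hw'. inversion Hw'; subst; auto.
  intros Hin. apply in_map_iff in Hin. destruct Hin as [w' [Hw' _]]. inversion Hw'; subst; auto.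
Qed.

Lemma csum_one_minus p T l c X : csum p T l c (fun c1 => 1 - X c1) = 1 - csum p T l c X.
Proof.
  rewrite (csum_ext _ _ _ _ _ (fun c1 => 1 * (fun _ => 1) c1 + (-1) * X c1)) by (intros; simpl; ring).
  rewrite csum_linear, csum_const. ring.
Qed.

Fixpoint phi (d : nat) (p : nat -> R) (n k : nat) : R :=
  match n with
  | O => 1
  | S m => psum (fun r => p r * (match Nat.max r k with O => 0 | S j => 1 - (1 - phi d p m j) ^ d end)) (S m)
           + (1 - psum p (S m))
  end.

Definition psi d p m rho := match rho with O => 0 | S j => 1 - (1 - phi d p m j) ^ d end.

Lemma phi_S d p m k : phi d p (S m) k = psum (fun r => p r * psi d p m (Nat.max r k)) (S m) + (1 - psum p (S m)).
Proof. reflexivity. Qed.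

Lemma psum_S f n : psum f (S n) = psum f n + f n.
Proof. reflexivity. Qed.

Lemma psum_split f n m : psum f (n + m) = psum f n + psum (fun r => f (n + r)%nat) m.
Proof.
  induction m. rewrite Nat.add_0_r. change (psum (fun r => f (n + r)%nat) 0) with 0. ring.
  rewrite Nat.add_succ_r, !psum_S, IHm. ring.
Qed.

Lemma qsum p T n g : (n <= T)%nat -> (forall r, (n <= r)%nat -> g r = 1) ->
  psum (fun r => qtrunc p T r * g r) (S T) = psum (fun r => p r * g r) n + (1 - psum p n).
Proof.
  intros Hn Hg. rewrite psum_S.
  rewrite (psum_ext _ (fun r => p r * g r)).
  2:{ intros r Hr. unfold qtrunc. apply Nat.ltb_lt in Hr. rewrite Hr. auto. }
  unfold qtrunc. rewrite Nat.ltb_irrefl. rewrite (Hg T Hn).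
  replace T with (n + (T - n))%nat by lia.
  rewrite !psum_split.
  rewrite (psum_ext (fun r => p (n + r)%nat * g (n + r)%nat) (fun r => p (n + r)%nat)).
  ring. intros. rewrite Hg by lia. ring.
Qed.

Lemma phi_top d p n j : (1 <= d)%nat -> (n <= j)%nat -> phi d p n j = 1.
Proof.
  intros Hd. revert j; induction n; intros j Hj; auto.
  rewrite phi_S. rewrite (psum_ext _ p). ring.
  intros r Hr. unfold psi. destruct (Nat.max r j) eqn:E. lia.
  rewrite IHn by lia. replace (1 - 1) with 0 by ring. rewrite pow_i by lia. ring.
Qed.

Definition Reach d p T n k c := csum p T (verts_below d n) c
  (fun c1 => ind (exists v, In v (words d n) /\ active d (upd c1 [] (Nat.max (c1 []) k)) v)).

Lemma ind_true (P : Prop) : P -> ind P = 1.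
Proof. intros. unfold ind. destruct (excluded_middle_informative P); tauto. Qed.
Lemma ind_false (P : Prop) : ~ P -> ind P = 0.
Proof. intros. unfold ind. destruct (excluded_middle_informative P); tauto. Qed.

Lemma shift_upd_root (c : word -> nat) i r : shift (upd c [] r) i = shift c i.
Proof. apply functional_extensionality; intro w. unfold shift. apply upd_other. discriminate. Qed.

Lemma eq_prodl f g l : (forall i, In i l -> f i = g i) -> prodl f l = prodl g l.
Proof. induction l; simpl; intros H; auto. rewrite H by (left; auto). rewrite IHl; auto. Qed.

Lemma Reach_phi d p : (1 <= d)%nat -> forall n T k c, (n <= T)%nat -> Reach d p T n k c = phi d p n k.
Proof.
  intros Hd n. induction n as [|m IH]; intros T k c HT.
  - unfold Reach. simpl. apply ind_true. exists []. split. left; auto. constructor.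
  - unfold Reach. change (verts_below d (S m)) with ([] :: flat_map (words d) (seq 1 m)).
    cbn [csum]. rewrite phi_S.
    rewrite (psum_ext _ (fun r => qtrunc p T r * psi d p m (Nat.max r k))).
    + apply qsum. auto. intros r Hr. unfold psi. destruct (Nat.max r k) eqn:E. lia.
      rewrite phi_top by lia. replace (1 - 1) with 0 by ring. rewrite pow_i by lia. ring.
    + intros r _. f_equal.
      assert (Hnin : ~ In [] (flat_map (words d) (seq 1 m))).
      { intro H. apply in_flat_map in H. destruct H as [x [Hx Hw]]. apply In_words in Hw.
        apply in_seq in Hx. simpl in Hw. lia. }
      rewrite (csum_ext_at _ _ _ [] _ (fun c' => ind (exists v, In v (words d (S m)) /\ active d (upd c' [] (Nat.max r k)) v)) Hnin).
      2:{ intros c' Hc'. rewrite upd_eq in Hc'. rewrite Hc'. auto. }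
      unfold psi. destruct (Nat.max r k) as [|j] eqn:E.
      * rewrite (csum_ext _ _ _ _ _ (fun _ => 0)). apply csum_const.
        intros c'. apply ind_false. intros [v [Hv Ha]]. apply active_root0 in Ha.
        subst. apply In_words in Hv. simpl in Hv. lia. apply upd_eq.
      * set (Gm := fun c0 : word -> nat => 1 - ind (exists w, In w (words d m) /\ active d (upd c0 [] (Nat.max (c0 []) j)) w)).
        rewrite (csum_ext _ _ _ _ _ (fun c' => 1 - prodl (fun i => Gm (shift c' i)) (seq 0 d))).
        2:{ intros c'. rewrite (ind_iff _ _ (event_split d (upd c' [] (S j)) j m (upd_eq _ _ _))).
            rewrite ind_exists_list. unfold Gm.
            assert (Hcs: forall i, cs (upd c' [] (S j)) i j = upd (shift c' i) [] (Nat.max (shift c' i []) j)).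
            { intros i. unfold cs. rewrite shift_upd_root. rewrite (upd_other c') by discriminate. auto. }
            apply f_equal. apply eq_prodl. intros i _. rewrite Hcs. auto. }
        rewrite csum_one_minus. rewrite (csum_perm _ _ _ _ (rest_perm d m)). unfold rest'.
        rewrite (csum_prod p T (verts_below d m) (seq 0 d) (fun i c' => Gm (shift c' i))).
        -- rewrite (eq_prodl _ (fun _ => 1 - phi d p m j)). rewrite prodl_const, length_seq. auto.
           intros i _. rewrite csum_relabel. unfold Gm. rewrite csum_one_minus. f_equal.
           apply IH. lia.
        -- apply seq_NoDup.
        -- intros i v _ Hv c' r'. f_equal. apply functional_extensionality; intro w.
           unfold shift. apply upd_other. intro H. apply (Hv w). auto.
Qed.

Lemma psum_nonneg f n : (forall r, 0 <= f r) -> 0 <= psum f n.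
Proof. intros H; induction n; rewrite ?psum_S; [unfold psum; lra|]. specialize (H n); lra. Qed.

Lemma psum_le f g n : (forall r, f r <= g r) -> psum f n <= psum g n.
Proof. intros H; induction n; rewrite ?psum_S; [unfold psum; lra|]. specialize (H n); lra. Qed.

Lemma psum_mono f n m : (forall r, 0 <= f r) -> (n <= m)%nat -> psum f n <= psum f m.
Proof.
  intros H Hnm. replace m with (n + (m - n))%nat by lia. rewrite psum_split.
  pose proof (psum_nonneg (fun r => f (n + r)%nat) (m - n) (fun r => H _)). lra.
Qed.

Lemma psum_ge_term f n r0 : (forall r, 0 <= f r) -> (r0 < n)%nat -> f r0 <= psum f n.
Proof.
  intros H Hr. induction n. lia. rewrite psum_S.
  destruct (Nat.eq_dec r0 n). subst. pose proof (psum_nonneg f n H); lra.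
  pose proof (IHn ltac:(lia)). specialize (H n). lra.
Qed.

Lemma pow01 y k : 0 <= y <= 1 -> 0 <= y ^ k <= 1.
Proof.
  intros H. split. apply pow_le; lra. rewrite <- (pow1 k). apply pow_incr; lra.
Qed.

Lemma psi_bounds d p m rho : (forall j, 0 <= phi d p m j <= 1) -> 0 <= psi d p m rho <= 1.
Proof.
  intros H. unfold psi. destruct rho. lra. pose proof (pow01 (1 - phi d p m rho) d).
  specialize (H rho). specialize (H0 ltac:(lra)). lra.
Qed.

Section An.
Context (d : nat) (p : nat -> R) (Hd : (2 <= d)%nat) (hp : forall k, 0 <= p k)
  (Hp1 : forall n, psum p n <= 1).

Lemma phi_bounds n k : 0 <= phi d p n k <= 1.
Proof.
  revert k; induction n; intros k. simpl; lra.
  rewrite phi_S. pose proof (Hp1 (S n)).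
  assert (H1 : forall r, 0 <= p r * psi d p n (Nat.max r k)).
  { intros r. pose proof (psi_bounds d p n (Nat.max r k) IHn). pose proof (hp r). nra. }
  assert (H2 : forall r, p r * psi d p n (Nat.max r k) <= p r).
  { intros r. pose proof (psi_bounds d p n (Nat.max r k) IHn). pose proof (hp r). nra. }
  pose proof (psum_nonneg _ (S n) H1). pose proof (psum_le _ _ (S n) H2). lra.
Qed.

Lemma psi_b m rho : 0 <= psi d p m rho <= 1.
Proof. apply psi_bounds. apply phi_bounds. Qed.

Lemma omp_mono x y K : 0 <= x <= y -> y <= 1 -> (1 - y) ^ K <= (1 - x) ^ K.
Proof. intros. apply pow_incr. lra. Qed.

Lemma phi_mono_k n k k' : (k <= k')%nat -> phi d p n k <= phi d p n k'.
Proof.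
  revert k k'; induction n; intros k k' Hk. simpl; lra.
  rewrite !phi_S. apply Rplus_le_compat_r. apply psum_le. intros r.
  apply Rmult_le_compat_l. apply hp. unfold psi.
  destruct (Nat.max r k) as [|j1] eqn:E1; destruct (Nat.max r k') as [|j2] eqn:E2; try lia.
  - lra.
  - pose proof (psi_b n (S j2)). unfold psi in H. lra.
  - assert (j1 <= j2)%nat by lia. pose proof (IHn _ _ H). pose proof (phi_bounds n j1). pose proof (phi_bounds n j2).
    pose proof (omp_mono (phi d p n j1) (phi d p n j2) d ltac:(lra) ltac:(lra)). lra.
Qed.

Lemma phi_dec n k : phi d p (S n) k <= phi d p n k.
Proof.
  revert k; induction n; intros k. pose proof (phi_bounds 1 k). simpl phi at 2. lra.
  rewrite (phi_S d p (S n)), (phi_S d p n). rewrite (psum_S _ (S n)), (psum_S p (S n)).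
  assert (psum (fun r => p r * psi d p (S n) (Nat.max r k)) (S n) <= psum (fun r => p r * psi d p n (Nat.max r k)) (S n)).
  { apply psum_le. intros r. apply Rmult_le_compat_l. apply hp. unfold psi.
    destruct (Nat.max r k). lra. pose proof (IHn n0). pose proof (phi_bounds n n0). pose proof (phi_bounds (S n) n0).
    pose proof (omp_mono (phi d p (S n) n0) (phi d p n n0) d ltac:(lra) ltac:(lra)). lra. }
  pose proof (psi_b (S n) (Nat.max (S n) k)). pose proof (hp (S n)). nra.
Qed.

Lemma phi_dec_le n n' k : (n <= n')%nat -> phi d p n' k <= phi d p n k.
Proof.
  intros H. induction H. lra. pose proof (phi_dec m k). lra.
Qed.

End An.

Definition Gf (K : nat) (y : R) := 1 - (1 - y) ^ K.

Lemma Gf_mono K x y : 0 <= x <= y -> y <= 1 -> Gf K x <= Gf K y.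
Proof. intros. unfold Gf. pose proof (pow_incr (1 - y) (1 - x) K ltac:(lra)). lra. Qed.

Lemma Gf_b K y : 0 <= y <= 1 -> 0 <= Gf K y <= 1.
Proof. intros. unfold Gf. pose proof (pow01 (1 - y) K ltac:(lra)). lra. Qed.

Lemma Gf_comp K d y : 1 - (1 - Gf K y) ^ d = Gf (K * d) y.
Proof. unfold Gf. rewrite pow_mult. f_equal. f_equal. f_equal. ring. Qed.

Lemma Gf_1 y : Gf 1 y = y.
Proof. unfold Gf. simpl. ring. Qed.

Lemma psum_shift f n : psum f (S n) = f 0%nat + psum (fun r => f (S r)) n.
Proof. induction n. unfold psum; simpl; ring. rewrite psum_S, IHn, psum_S. ring. Qed.

Lemma tail_lemma p f n M : (forall r, 0 <= f r <= p r) -> (forall n, psum p n <= 1) ->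
  psum f M <= psum f n + (1 - psum p n).
Proof.
  intros Hf Hp.
  destruct (Nat.le_gt_cases M n).
  - pose proof (psum_mono f M n (fun r => proj1 (Hf r)) H). pose proof (Hp n). lra.
  - replace M with (n + (M - n))%nat by lia. rewrite !psum_split.
    pose proof (Hp (n + (M - n))%nat). rewrite psum_split in H0.
    pose proof (psum_le (fun r => f (n + r)%nat) (fun r => p (n + r)%nat) (M - n) (fun r => proj2 (Hf _))). lra.
Qed.

Lemma bern2 x K : 0 <= x <= 1 -> (1 - x) ^ K <= 1 - INR K * x + INR K ^ 2 * x ^ 2.
Proof.
  intros Hx. induction K. simpl. lra.
  rewrite S_INR. simpl pow. simpl pow in IHK.
  assert (0 <= 1 - x) by lra.
  assert (0 <= 1 - INR K * x + INR K * (INR K * 1) * (x * (x * 1))).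
  { pose proof (pos_INR K). nra. }
  pose proof (pos_INR K).
  assert ((1 - x) * (1 - x) ^ K <= (1 - x) * (1 - INR K * x + INR K * (INR K * 1) * (x * (x * 1)))) by (apply Rmult_le_compat_l; lra).
  nra.
Qed.

Lemma psum_ext_le f g n : (forall r, (r < n)%nat -> f r <= g r) -> psum f n <= psum g n.
Proof. intros H; induction n; rewrite ?psum_S; [unfold psum; lra|]. pose proof (H n ltac:(lia)). pose proof (IHn ltac:(intros; apply H; lia)). lra. Qed.

Section An2.
Context (d : nat) (p : nat -> R) (Hd : (2 <= d)%nat) (hp : forall k, 0 <= p k)
  (Hp1 : forall n, psum p n <= 1).

Lemma psi_mono m rho rho' : (rho <= rho')%nat -> psi d p m rho <= psi d p m rho'.
Proof.
  intros H. unfold psi. destruct rho as [|j1]; destruct rho' as [|j2]; try lia.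
  lra. pose proof (psi_b d p hp Hp1 m (S j2)). unfold psi in H0. lra.
  pose proof (phi_mono_k d p Hd hp Hp1 m j1 j2 ltac:(lia)). pose proof (phi_bounds d p hp Hp1 m j1). pose proof (phi_bounds d p hp Hp1 m j2).
  pose proof (omp_mono (phi d p m j1) (phi d p m j2) d ltac:(lra) ltac:(lra)). lra.
Qed.

Lemma phi_ge_psi m j : psi d p m (S j) <= phi d p (S m) (S j).
Proof.
  rewrite phi_S. pose proof (psi_b d p hp Hp1 m (S j)). pose proof (Hp1 (S m)).
  assert (psum (fun r => p r * psi d p m (S j)) (S m) <= psum (fun r => p r * psi d p m (Nat.max r (S j))) (S m)).
  { apply psum_le. intros r. apply Rmult_le_compat_l. apply hp. apply psi_mono. lia. }
  rewrite (psum_ext _ (fun r => psi d p m (S j) * p r)) in H1 by (intros; ring).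
  rewrite <- psum_scal in H1. nra.
Qed.

Lemma PI1 j : forall m, (j <= m)%nat -> Gf (d ^ j) (phi d p (m - j) 0) <= phi d p m j.
Proof.
  induction j; intros m Hm.
  - rewrite Nat.sub_0_r. simpl. rewrite Gf_1. lra.
  - destruct m as [|m']. lia. simpl (S m' - S j)%nat.
    pose proof (phi_ge_psi m' j). unfold psi in H.
    pose proof (IHj m' ltac:(lia)).
    pose proof (phi_bounds d p hp Hp1 m' j). pose proof (phi_bounds d p hp Hp1 (m' - j) 0).
    pose proof (Gf_b (d ^ j) _ H2).
    pose proof (omp_mono (Gf (d ^ j) (phi d p (m' - j) 0)) (phi d p m' j) d ltac:(lra) ltac:(lra)).
    pose proof (Gf_comp (d ^ j) d (phi d p (m' - j) 0)) as Hc. rewrite Nat.pow_succ_r by lia. rewrite Nat.mul_comm. lra.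
Qed.

Definition gI eps r := match r with O => 0 | S _ => Gf (d ^ r) eps end.

Lemma PI_main eps M : 0 < eps <= 1 -> eps <= psum (fun r => p r * gI eps r) M -> forall n, eps <= phi d p n 0.
Proof.
  intros He HM.
  assert (forall N n, (n <= N)%nat -> eps <= phi d p n 0).
  { induction N; intros n Hn.
    - replace n with 0%nat by lia. simpl; lra.
    - destruct n as [|m]. simpl; lra.
      rewrite phi_S.
      assert (Hg : forall r, 0 <= p r * gI eps r <= p r).
      { intros r. pose proof (hp r). unfold gI. destruct r. lra. pose proof (Gf_b (d ^ S r) eps ltac:(lra)). nra. }
      pose proof (tail_lemma p _ (S m) M Hg Hp1).
      assert (psum (fun r => p r * gI eps r) (S m) <= psum (fun r => p r * psi d p m (Nat.max r 0)) (S m)).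
      { apply psum_ext_le. intros r Hr. apply Rmult_le_compat_l. apply hp.
        rewrite Nat.max_0_r. unfold gI, psi. destruct r as [|r']. lra.
        pose proof (PI1 r' m ltac:(lia)).
        pose proof (IHN (m - r')%nat ltac:(lia)).
        pose proof (phi_bounds d p hp Hp1 (m - r') 0). pose proof (phi_bounds d p hp Hp1 m r').
        pose proof (Gf_mono (d ^ r') eps (phi d p (m - r') 0) ltac:(lra) ltac:(lra)).
        pose proof (Gf_b (d ^ r') eps ltac:(lra)).
        pose proof (omp_mono (Gf (d ^ r') eps) (phi d p m r') d ltac:(lra) ltac:(lra)).
        pose proof (Gf_comp (d ^ r') d eps) as Hc. rewrite Nat.pow_succ_r by lia. rewrite Nat.mul_comm. lra. }
      lra. }
  intros n. apply (H n n). lia.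
Qed.

End An2.

Lemma eps_exists d p (Hd : (2 <= d)%nat) (hp : forall k, 0 <= p k) N :
  1 < psum (fun r => p (S r) * INR d ^ (S r)) N ->
  exists eps, 0 < eps <= 1 /\ eps <= psum (fun r => p r * gI d eps r) (S N).
Proof.
  intros HM.
  set (M := psum (fun r => p (S r) * INR d ^ (S r)) N) in *.
  set (Sm := psum (fun r => p (S r) * (INR d ^ (S r)) ^ 2) N).
  assert (Hd1 : 1 <= INR d). { apply (le_INR 1 d). lia. }
  assert (HSM : M <= Sm).
  { apply psum_le. intros r. pose proof (hp (S r)). pose proof (pow_R1_Rle (INR d) (S r) Hd1).
    assert (0 <= p (S r) * INR d ^ S r * (INR d ^ S r - 1)) by (apply Rmult_le_pos; [apply Rmult_le_pos|]; lra).
    set (y := INR d ^ S r) in *. replace (y ^ 2) with (y * y) by ring. nra. }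
  exists ((M - 1) / Sm). assert (0 < Sm) by lra.
  assert (He : 0 < (M - 1) / Sm <= 1).
  { split. apply Rdiv_lt_0_compat; lra. apply Rmult_le_reg_r with Sm; auto.
    unfold Rdiv. rewrite Rmult_assoc, Rinv_l by lra. lra. }
  split; auto.
  set (eps := (M - 1) / Sm) in *.
  rewrite psum_shift. simpl (gI d eps 0). rewrite Rmult_0_r, Rplus_0_l.
  apply Rle_trans with (psum (fun r => eps * (p (S r) * INR d ^ (S r)) + (- eps ^ 2) * (p (S r) * (INR d ^ (S r)) ^ 2)) N).
  - rewrite psum_plus, <- !psum_scal. fold M Sm.
    replace (eps * M + - eps ^ 2 * Sm) with (eps * (M - eps * Sm)) by ring.
    assert (eps * Sm = M - 1) by (unfold eps; field; lra).
    replace (M - eps * Sm) with 1 by lra. lra.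
  - apply psum_le. intros r. unfold gI, Gf.
    pose proof (bern2 eps (d ^ S r) ltac:(lra)). rewrite pow_INR in H0.
    pose proof (hp (S r)). nra.
Qed.

Fixpoint Nn (d j : nat) : nat := match j with O => 1%nat | S j' => (1 + Nn d j' * d)%nat end.
Definition Kn (d r : nat) : nat := match r with O => 0%nat | S r' => (Nn d r' * d)%nat end.

Lemma Nn_id d j : (INR d - 1) * INR (Nn d j) = INR d ^ (S j) - 1.
Proof.
  induction j. simpl. ring. change (Nn d (S j)) with (1 + Nn d j * d)%nat. rewrite plus_INR, mult_INR. change (INR 1) with 1.
  replace ((INR d - 1) * (1 + INR (Nn d j) * INR d)) with ((INR d - 1) + ((INR d - 1) * INR (Nn d j)) * INR d) by ring.
  rewrite IHj. simpl. ring.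
Qed.

Lemma Kn_id d r : (INR d - 1) * INR (Kn d r) = INR d * INR d ^ r - INR d.
Proof.
  destruct r. simpl. ring. simpl Kn. rewrite mult_INR.
  replace ((INR d - 1) * (INR (Nn d r) * INR d)) with (((INR d - 1) * INR (Nn d r)) * INR d) by ring.
  rewrite Nn_id. simpl. ring.
Qed.

Lemma Nn_pos d j : (1 <= Nn d j)%nat.
Proof. destruct j; simpl; lia. Qed.

Lemma bern_gen x K : 0 <= x <= 1 -> 0 <= x ^ K - 1 + INR K * (1 - x).
Proof.
  intros Hx. induction K. simpl. lra.
  rewrite S_INR. simpl pow.
  pose proof (pow01 x K Hx).
  assert (0 <= (1 - x) * (1 - x ^ K)) by (apply Rmult_le_pos; lra). nra.
Qed.

Lemma bern_gen2 x K : 0 <= x <= 1 -> (2 <= K)%nat -> (1 - x) ^ 2 <= x ^ K - 1 + INR K * (1 - x).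
Proof.
  intros Hx HK. induction HK. simpl. lra.
  rewrite S_INR. simpl pow.
  pose proof (pow01 x m Hx).
  assert (0 <= (1 - x) * (1 - x ^ m)) by (apply Rmult_le_pos; lra). nra.
Qed.

Lemma sum_psum f n : sum_f_R0 f n = psum f (S n).
Proof. induction n. simpl. unfold psum; simpl; ring. simpl sum_f_R0. rewrite IHn, (psum_S _ (S n)). auto. Qed.

Lemma partial_le f l : (forall r, 0 <= f r) -> infinite_sum f l -> forall n, psum f n <= l.
Proof.
  intros Hf Hs n. destruct (Rle_dec (psum f n) l) as [|Hn]; auto. exfalso.
  destruct (Hs (psum f n - l) ltac:(lra)) as [N HN].
  specialize (HN (Nat.max N n) ltac:(lia)). rewrite sum_psum in HN.
  pose proof (psum_mono f n (S (Nat.max N n)) Hf ltac:(lia)).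
  unfold R_dist in HN. apply Rabs_def2 in HN. lra.
Qed.

Lemma archi g : 0 < g -> exists k : nat, 1 < INR k * g.
Proof.
  intros Hg. destruct (archimed (1 / g)) as [H _].
  assert (0 < 1 / g) by (apply Rdiv_lt_0_compat; lra).
  assert (0 <= up (1 / g))%Z. { apply le_IZR. lra. }
  exists (Z.to_nat (up (1 / g))). rewrite INR_IZR_INZ, Znat.Z2Nat.id by auto.
  apply Rmult_lt_compat_r with (r := g) in H; auto. unfold Rdiv in H. rewrite Rmult_assoc, Rinv_l in H by lra. lra.
Qed.

Lemma psi_S d p m k : psi d p m (S k) = 1 - (1 - phi d p m k) ^ d.
Proof. reflexivity. Qed.

Section An3.
Context (d : nat) (p : nat -> R) (Hd : (2 <= d)%nat) (hp : forall k, 0 <= p k)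
  (Hp1 : forall n, psum p n <= 1).

Definition aa n k := 1 - phi d p n k.

Lemma aa_b n k : 0 <= aa n k <= 1.
Proof. unfold aa. pose proof (phi_bounds d p hp Hp1 n k). lra. Qed.

Lemma aa_inc n n' : (n <= n')%nat -> aa n 0 <= aa n' 0.
Proof. intros. unfold aa. pose proof (phi_dec_le d p hp Hp1 n n' 0 H). lra. Qed.

Lemma aa_S m k : aa (S m) k = psum (fun r => p r * (1 - psi d p m (Nat.max r k))) (S m).
Proof.
  unfold aa. rewrite phi_S.
  rewrite (psum_ext (fun r => p r * (1 - psi d p m (Nat.max r k))) (fun r => p r + (-1) * (p r * psi d p m (Nat.max r k)))) by (intros; ring).
  rewrite psum_plus, <- psum_scal. ring.
Qed.

Lemma B1 m k : aa (S m) 0 * (aa m k) ^ d <= aa (S m) (S k).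
Proof.
  rewrite !aa_S. rewrite Rmult_comm, psum_scal. apply psum_le. intros r.
  rewrite Nat.max_0_r.
  assert (E : 1 - psi d p m (S k) = aa m k ^ d) by (rewrite psi_S; unfold aa; ring).
  rewrite <- E. pose proof (psi_b d p hp Hp1 m r). pose proof (psi_b d p hp Hp1 m (S k)). pose proof (hp r).
  destruct (Nat.le_ge_cases r (S k)).
  - rewrite Nat.max_r by auto.
    assert ((1 - psi d p m r) * (1 - psi d p m (S k)) <= 1 - psi d p m (S k)) by nra. nra.
  - rewrite Nat.max_l by auto.
    assert ((1 - psi d p m r) * (1 - psi d p m (S k)) <= 1 - psi d p m r) by nra. nra.
Qed.

Lemma B3 j : forall m, (j <= m)%nat -> (aa (m - j) 0) ^ (Nn d j) <= aa m j.
Proof.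
  induction j; intros m Hm.
  - rewrite Nat.sub_0_r. simpl. lra.
  - destruct m as [|m']. lia. simpl (S m' - S j)%nat.
    pose proof (B1 m' j). pose proof (IHj m' ltac:(lia)).
    set (x := aa (m' - j) 0) in *.
    pose proof (aa_b (m' - j) 0). pose proof (aa_inc (m' - j) (S m') ltac:(lia)).
    pose proof (pow01 x (Nn d j) ltac:(fold x in H1; lra)).
    pose proof (pow_incr _ _ d (conj (proj1 H3) H0)).
    pose proof (pow01 (x ^ Nn d j) d H3).
    pose proof (aa_b m' j). pose proof (pow01 (aa m' j) d ltac:(lra)).
    change (Nn d (S j)) with (1 + Nn d j * d)%nat. rewrite pow_add, pow_1, pow_mult.
    assert (x * (x ^ Nn d j) ^ d <= aa (S m') 0 * aa m' j ^ d).
    { fold x in H1, H2. apply Rmult_le_compat; lra. }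
    lra.
Qed.

Lemma B4 N m : (N <= m)%nat -> psum (fun r => p r * (aa (m - N) 0) ^ (Kn d r)) (S N) <= aa (S m) 0.
Proof.
  intros HN. rewrite aa_S.
  set (x := aa (m - N) 0).
  assert (Hx : 0 <= x <= 1) by apply aa_b.
  apply Rle_trans with (psum (fun r => p r * (1 - psi d p m (Nat.max r 0))) (S N)).
  - apply psum_ext_le. intros r Hr. apply Rmult_le_compat_l. apply hp. rewrite Nat.max_0_r.
    destruct r as [|r']. simpl. unfold psi. lra.
    assert (E : 1 - psi d p m (S r') = aa m r' ^ d) by (rewrite psi_S; unfold aa; ring). rewrite E.
    simpl Kn. rewrite pow_mult.
    pose proof (B3 r' m ltac:(lia)). pose proof (aa_inc (m - N) (m - r') ltac:(lia)). fold x in H0.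
    apply pow_incr. split. apply pow_le; lra.
    apply Rle_trans with (aa (m - r') 0 ^ Nn d r'); auto. apply pow_incr. lra.
  - apply psum_mono. intros r. pose proof (hp r). pose proof (psi_b d p hp Hp1 m (Nat.max r 0)). nra. lia.
Qed.

End An3.

Lemma key_ineq d p (hp : forall k, 0 <= p k) (Hd : (2 <= d)%nat) N r0 eps x :
  0 < eps <= 1 -> 0 <= x <= 1 - eps -> (1 <= r0 <= N)%nat ->
  1 - psum p (S N) <= p r0 * eps ^ 2 / 6 ->
  psum (fun r => p r * INR (Kn d r)) (S N) <= 1 + 2 * (1 - psum p (S N)) ->
  psum p (S N) <= 1 ->
  x + p r0 * eps ^ 2 / 2 <= psum (fun r => p r * x ^ (Kn d r)) (S N).
Proof.
  intros He Hx Hr HP HK HP1.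
  set (u := fun r => p r * (x ^ Kn d r - 1 + INR (Kn d r) * (1 - x))).
  rewrite (psum_ext (fun r => p r * x ^ Kn d r) (fun r => (p r + (- (1 - x)) * (p r * INR (Kn d r))) + u r))
    by (intros; unfold u; ring).
  rewrite psum_plus, psum_plus, <- psum_scal.
  assert (Hu : forall r, 0 <= u r).
  { intros r. unfold u. apply Rmult_le_pos. apply hp. apply bern_gen. lra. }
  pose proof (psum_ge_term u (S N) r0 Hu ltac:(lia)).
  assert (HK2 : (2 <= Kn d r0)%nat).
  { destruct r0. lia. simpl. pose proof (Nn_pos d r0). nia. }
  pose proof (bern_gen2 x (Kn d r0) ltac:(lra) HK2).
  assert (eps ^ 2 <= (1 - x) ^ 2). { apply pow_incr. lra. }
  assert (p r0 * eps ^ 2 <= u r0). { unfold u. pose proof (hp r0). nra. }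
  assert ((1 - x) * psum (fun r => p r * INR (Kn d r)) (S N) <= (1 - x) * (1 + 2 * (1 - psum p (S N)))).
  { apply Rmult_le_compat_l; lra. }
  assert ((1 - x) * (2 * (1 - psum p (S N))) <= 2 * (1 - psum p (S N))).
  { assert (0 <= 1 - psum p (S N)) by lra. nra. }
  nra.
Qed.

Lemma KS d p (hp : forall k, 0 <= p k) (Hd : (2 <= d)%nat) N :
  psum (fun r => p r * INR d ^ r) (S N) <= 2 - 1 / INR d -> psum p (S N) <= 1 ->
  psum (fun r => p r * INR (Kn d r)) (S N) <= 1 + 2 * (1 - psum p (S N)).
Proof.
  intros H HP.
  assert (Hd2 : 2 <= INR d) by (apply (le_INR 2 d); lia).
  assert (E : (INR d - 1) * psum (fun r => p r * INR (Kn d r)) (S N) =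
              INR d * psum (fun r => p r * INR d ^ r) (S N) - INR d * psum p (S N)).
  { rewrite (psum_scal (INR d - 1)).
    rewrite (psum_ext (fun r => (INR d - 1) * (p r * INR (Kn d r))) (fun r => INR d * (p r * INR d ^ r) + (- INR d) * p r)).
    rewrite psum_plus, <- (psum_scal (- INR d) p), <- (psum_scal (INR d) (fun r => p r * INR d ^ r)). ring.
    intros r _. replace ((INR d - 1) * (p r * INR (Kn d r))) with (p r * ((INR d - 1) * INR (Kn d r))) by ring.
    rewrite Kn_id. ring. }
  apply Rmult_le_reg_l with (INR d - 1). lra. rewrite E.
  assert (INR d * (2 - 1 / INR d) = 2 * INR d - 1) by (field; lra).
  assert (INR d * psum (fun r => p r * INR d ^ r) (S N) <= INR d * (2 - 1 / INR d)) by (apply Rmult_le_compat_l; lra).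
  nra.
Qed.

Lemma upd_self (c : word -> nat) v : upd c v (c v) = c.
Proof. apply functional_extensionality; intro x. unfold upd. destruct (list_eq_dec Nat.eq_dec x v); subst; auto. Qed.

Theorem theorem1 (d : nat) (p : nat -> R)
  (hd : (2 <= d)%nat)
  (hp : forall k, 0 <= p k)
  (hsum : infinite_sum p 1)
  (hp0 : 0 < p 0%nat < 1) :
  ((* (I): E(d^R) > 1 + p_0, the expectation possibly infinite *)
   (exists N, sum_f_R0 (dR_term d p) N > 1 + p 0%nat) -> survives_pos d p)
  /\
  ((* (II): E(d^R) <= 2 - 1/d *)
   (exists l, infinite_sum (dR_term d p) l /\ l <= 2 - 1 / INR d) -> dies_as d p).
Proof.
  pose proof (partial_le p 1 hp hsum) as Hp1.
  assert (Hreach : forall n, reach_prob d p n = phi d p n 0).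
  { intros n. rewrite <- (Reach_phi d p ltac:(lia) n n 0 (fun _ => 0%nat)) by lia.
    unfold reach_prob, Reach. apply csum_ext. intros c. rewrite Nat.max_0_r, upd_self. auto. }
  split.
  - intros [N HN]. rewrite sum_psum, psum_shift in HN. unfold dR_term in HN.
    rewrite pow_O in HN.
    destruct (eps_exists d p hd hp N ltac:(lra)) as [eps [He HM]].
    exists eps. split. lra. intros n. rewrite Hreach.
    pose proof (PI_main d p hd hp Hp1 eps (S N) He HM n). lra.
  - intros [l [Hl Hl2]]. unfold dies_as.
    assert (Hdr : forall n, psum (dR_term d p) n <= l).
    { apply partial_le; auto. intros r. unfold dR_term. apply Rmult_le_pos; auto. apply pow_le, pos_INR. }
    assert (Hr0 : exists r0, (1 <= r0)%nat /\ 0 < p r0).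
    { destruct (classic (exists r0, (1 <= r0)%nat /\ 0 < p r0)) as [|Hno]; auto. exfalso.
      assert (Hz : forall r, (1 <= r)%nat -> p r = 0).
      { intros r Hr. destruct (Rlt_le_dec 0 (p r)). exfalso; apply Hno; eauto. pose proof (hp r); lra. }
      destruct (hsum (1 - p 0%nat) ltac:(lra)) as [N HN]. specialize (HN N ltac:(lia)).
      rewrite sum_psum, psum_shift in HN. rewrite (psum_ext _ (fun _ => 0)) in HN by (intros; apply Hz; lia).
      rewrite psum_zero in HN. unfold R_dist in HN. apply Rabs_def2 in HN. lra. }
    destruct Hr0 as [r0 [Hr0 Hpr0]].
    assert (Main : forall eps, 0 < eps <= 1 -> exists n, phi d p n 0 < eps).
    { intros eps He. destruct (classic (exists n, phi d p n 0 < eps)) as [|Hno]; auto. exfalso.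
      assert (Hall : forall n, eps <= phi d p n 0).
      { intros n. destruct (Rlt_le_dec (phi d p n 0) eps); auto. exfalso; apply Hno; eauto. }
      assert (Hg : 0 < p r0 * eps ^ 2 / 6).
      { assert (0 < eps ^ 2) by (apply pow_lt; lra). apply Rdiv_lt_0_compat. nra. lra. }
      destruct (hsum _ Hg) as [N0 HN0].
      set (N := Nat.max N0 r0).
      specialize (HN0 N ltac:(lia)). rewrite sum_psum in HN0. unfold R_dist in HN0. apply Rabs_def2 in HN0.
      assert (HKS := KS d p hp hd N).
      assert (Hdr' : psum (fun r => p r * INR d ^ r) (S N) <= 2 - 1 / INR d) by (pose proof (Hdr (S N)); unfold dR_term in H; lra).
      specialize (HKS Hdr' (Hp1 (S N))).
      set (g := p r0 * eps ^ 2 / 2).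
      assert (Hstep : forall k, INR k * g <= aa d p (k * S N) 0).
      { induction k.
        - simpl. unfold aa. simpl. lra.
        - replace (S k * S N)%nat with (S (k * S N + N)) by lia.
          pose proof (B4 d p hd hp Hp1 N (k * S N + N) ltac:(lia)).
          replace (k * S N + N - N)%nat with (k * S N)%nat in H by lia.
          pose proof (aa_b d p hp Hp1 (k * S N) 0).
          assert (aa d p (k * S N) 0 <= 1 - eps) by (unfold aa; pose proof (Hall (k * S N)%nat); lra).
          pose proof (key_ineq d p hp hd N r0 eps (aa d p (k * S N) 0) He ltac:(lra) ltac:(lia) ltac:(lra) HKS (Hp1 (S N))).
          rewrite S_INR. unfold g in *. lra. }
      assert (0 < g) by (unfold g; assert (0 < eps ^ 2) by (apply pow_lt; lra); nra).
      destruct (archi g H) as [k Hk]. pose proof (Hstep k). pose proof (aa_b d p hp Hp1 (k * S N) 0). lra. }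
    intros eps Heps. destruct (Main (Rmin eps 1)) as [n0 Hn0].
    { split. apply Rmin_pos; lra. apply Rmin_r. }
    exists n0. intros n Hn. unfold R_dist. rewrite Hreach, Rminus_0_r.
    pose proof (phi_dec_le d p hp Hp1 n0 n 0 Hn). pose proof (phi_bounds d p hp Hp1 n 0).
    pose proof (Rmin_l eps 1). rewrite Rabs_right by lra. lra.
Qed.
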